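(* Let $E=\mathbb{N}=\{0,1,2,\dots\}$ with the discrete topology, $\rho(n)=e^{n^2}$, and fix $\alpha>1$. For $t\ge0$ define transition probabilities $p_{i,j}(t)$ by: $p_{0,0}(t)=1$; for even $n\ge2$, $p_{n,n}(t)=e^{-(n-1)^\alpha t}$, $p_{n,0}(t)=1-e^{-(n-1)^\alpha t}$; for odd $n$, $p_{n,n}(t)=e^{-n^\alpha t}$, $p_{n,n+1}(t)=e^{-n}n^\alpha t e^{-n^\alpha t}$, $p_{n,0}(t)=1-e^{-n^\alpha t}-e^{-n}n^\alpha te^{-n^\alpha t}$; all other $p_{i,j}(t)=0$ (these are the transition probabilities $e^{tA}$ of the continuous-time Markov chain with rates $a_{n,n+1}=n^\alpha e^{-n}$, $a_{n,n}=-n^\alpha$, $a_{n,0}=n^\alpha(1-e^{-n})$ for odd $n$, and $a_{n,n}=-(n-1)^\alpha$, $a_{n,0}=(n-1)^\alpha$ for even $n$). Set $P(t)f(n):=\sum_j p_{n,j}(t)f(j)$. Then each $P(t)$ is a well-defined bounded linear operator on $\mathscr{B}^\rho(\mathbb{N})$, and for odd $n$ $$P(t)\rho(n)=\rho(n)e^{-n^\alpha t}+\rho(n+1)n^\alpha te^{-n^\alpha t}e^{-n}+\rho(0)\big(1-e^{-n^\alpha t}-e^{-n}n^\alpha te^{-n^\alpha t}\big).$$ The family $(P(t))_{t\ge0}$ satisfies conditions (P1), (P2), (P3), (P5) of a generalized Feller semigroup, but $\|P(t)\|_{L(\mathscr{B}^\rho(\mathbb{N}))}\to\infty$ as $t\downarrow0$;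 in particular (P4) fails and $(P(t))$ is not strongly continuous on $\mathscr{B}^\rho(\mathbb{N})$.
   Context: For a weighted space $(E,\rho)$ and $f:E\to\mathbb{R}$ put $\|f\|_\rho:=\sup_{x\in E}|f(x)|/\rho(x)$; $\mathscr{B}^\rho(E)$ denotes the closure of $C_b(E)$ with respect to $\|\cdot\|_\rho$ inside $\{f:\|f\|_\rho<\infty\}$ (for discrete $\mathbb{N}$ and $\rho(n)=e^{n^2}$ these are the functions with $f(n)/\rho(n)\to0$). The conditions are: (P1) $P(0)=\mathrm{Id}$; (P2) $P(t+s)=P(s)P(t)$ for all $s,t\ge0$; (P3) $\lim_{t\downarrow0}P(t)f(x)=f(x)$ for all $f\in\mathscr{B}^\rho(E)$, $x\in E$; (P4) there exist $\varepsilon>0$, $C<\infty$ with $\|P(t)\|_{L(\mathscr{B}^\rho(E))}\le C$ for all $t\in[0,\varepsilon]$; (P5) each $P(t)$ is a positive operator. Strong continuity means $\|P(t)f-f\|_\rho\to0$ as $t\downarrow0$ for every $f\in\mathscr{B}^\rho(E)$. *)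

(* Defs.v *)
From Stdlib Require Import Reals Lra Arith.
From Coquelicot Require Import Coquelicot.
Open Scope R_scope.

Definition rho (n : nat) : R := exp (INR n ^ 2).

Definition wnorm (f : nat -> R) : Rbar :=
  Lub_Rbar (fun r => exists n, r = Rabs (f n) / rho n).

(* C_b(N) for the discrete topology = bounded functions *)
Definition Cb (g : nat -> R) : Prop := exists M, forall n, Rabs (g n) <= M.

(* B^rho(N): closure of C_b(N) w.r.t. ||.||_rho inside {f : ||f||_rho < oo} *)
Definition Brho (f : nat -> R) : Prop :=
  (exists C, Rbar_le (wnorm f) (Finite C)) /\
  forall eps, 0 < eps -> exists g, Cb g /\ Rbar_le (wnorm (fun n => f n - g n)) (Finite eps).

Definition p (alpha : R) (i j : nat) (t : R) : R :=
  if Nat.eqb i 0 then (if Nat.eqb j 0 then 1 else 0)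
  else if Nat.even i then
    let a := Rpower (INR i - 1) alpha in
    if Nat.eqb j i then exp (- a * t)
    else if Nat.eqb j 0 then 1 - exp (- a * t) else 0
  else
    let a := Rpower (INR i) alpha in
    if Nat.eqb j i then exp (- a * t)
    else if Nat.eqb j (i + 1) then exp (- INR i) * a * t * exp (- a * t)
    else if Nat.eqb j 0 then 1 - exp (- a * t) - exp (- INR i) * a * t * exp (- a * t)
    else 0.

Definition P (alpha t : R) (f : nat -> R) (n : nat) : R :=
  Series (fun j => p alpha n j t * f j).

Definition opnorm (alpha t : R) : Rbar :=
  Lub_Rbar (fun r => exists f, Brho f /\ Rbar_le (wnorm f) (Finite 1) /\
                              wnorm (P alpha t f) = Finite r).

(* Main.v *)
Require Import Defs.
From Stdlib Require Import Reals Lra Lia Arith Classical FunctionalExtensionality.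
From Coquelicot Require Import Coquelicot.
Open Scope R_scope.

Lemma exp_le x y : x <= y -> exp x <= exp y.
Proof. intros [H|H]; [left; apply exp_increasing; exact H| subst; lra]. Qed.

Lemma rho_ge1 n : 1 <= rho n.
Proof. unfold rho. rewrite <- exp_0. apply exp_le. pose proof (pos_INR n). nra. Qed.
Lemma rho_pos n : 0 < rho n.
Proof. pose proof (rho_ge1 n); lra. Qed.

Lemma wnorm_le (h : nat -> R) c : (forall n, Rabs (h n) / rho n <= c) -> Rbar_le (wnorm h) (Finite c).
Proof.
  intros H. unfold wnorm. destruct (Lub_Rbar_correct (fun r => exists n, r = Rabs (h n) / rho n)) as [_ H2].
  apply H2. intros x [n ->]. simpl. apply H.
Qed.

Lemma wnorm_ub (h : nat -> R) n : Rbar_le (Finite (Rabs (h n) / rho n)) (wnorm h).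
Proof.
  unfold wnorm. destruct (Lub_Rbar_correct (fun r => exists n, r = Rabs (h n) / rho n)) as [H1 _].
  apply H1. eauto.
Qed.

Lemma wnorm_le_inv (h : nat -> R) c : Rbar_le (wnorm h) (Finite c) -> forall n, Rabs (h n) / rho n <= c.
Proof.
  intros H n. pose proof (wnorm_ub h n) as H1.
  exact (Rbar_le_trans _ _ (Finite c) H1 H).
Qed.

Lemma wnorm_fin (h : nat -> R) c : (forall n, Rabs (h n) / rho n <= c) ->
  exists r, wnorm h = Finite r /\ 0 <= r /\ forall n, Rabs (h n) / rho n <= r.
Proof.
  intros H. pose proof (wnorm_le h c H) as H1. pose proof (wnorm_ub h 0) as H0.
  destruct (wnorm h) as [r| |] eqn:E; simpl in *; try contradiction.
  exists r. split; [reflexivity|]. split.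
  - eapply Rle_trans; [|exact H0]. apply Rmult_le_pos; [apply Rabs_pos|]. left; apply Rinv_0_lt_compat, rho_pos.
  - intros n. pose proof (wnorm_ub h n) as Hn. rewrite E in Hn. exact Hn.
Qed.

Lemma Cb_Brho f : Cb f -> Brho f.
Proof.
  intros [M HM]. split.
  - exists M. apply wnorm_le. intros n. pose proof (rho_ge1 n). pose proof (Rabs_pos (f n)).
    pose proof (HM n). unfold Rdiv. apply Rle_trans with (Rabs (f n) * 1).
    + apply Rmult_le_compat_l; [lra|]. rewrite <- Rinv_1. apply Rinv_le_contravar; lra.
    + lra.
  - intros eps Heps. exists f. split; [exists M; exact HM|]. apply wnorm_le. intros n.
    replace (f n - f n) with 0 by ring. rewrite Rabs_R0. unfold Rdiv. rewrite Rmult_0_l. lra.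
Qed.

Lemma is_series_delta (m : nat) (c : R) : is_series (fun j => if Nat.eqb j m then c else 0) c.
Proof.
  unfold is_series. change (is_lim_seq (sum_n (fun j => if Nat.eqb j m then c else 0)) c).
  apply (is_lim_seq_ext_loc (fun _ => c)).
  - exists m. intros k Hk. induction k.
    + assert (m = 0%nat) by lia. subst. rewrite sum_O. simpl. reflexivity.
    + rewrite sum_Sn. destruct (Nat.eq_dec m (S k)).
      * subst. replace (sum_n _ k) with 0.
        -- rewrite Nat.eqb_refl. unfold plus; simpl. ring.
        -- clear. assert (forall k', (k' <= k)%nat -> 0 = sum_n (fun j => if Nat.eqb j (S k) then c else 0) k').
           { induction k'; intros Hk'. rewrite sum_O. simpl. reflexivity.
             rewrite sum_Sn, <- IHk' by lia. destruct (Nat.eqb_spec (S k') (S k)); [lia|]. unfold plus; simpl; ring. }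
           apply H; lia.
      * rewrite <- IHk by lia. destruct (Nat.eqb_spec (S k) m); [lia|]. unfold plus; simpl; ring.
  - apply is_lim_seq_const.
Qed.

Definition ea alpha n := Rpower (INR n - 1) alpha.
Definition oa alpha n := Rpower (INR n) alpha.
Definition Bt alpha n t := exp (- INR n) * oa alpha n * t * exp (- oa alpha n * t).
Definition Pc alpha t (f : nat -> R) n :=
  if Nat.eqb n 0 then f 0%nat
  else if Nat.even n then f n * exp (- ea alpha n * t) + f 0%nat * (1 - exp (- ea alpha n * t))
  else f n * exp (- oa alpha n * t) + f (n+1)%nat * Bt alpha n t
       + f 0%nat * (1 - exp (- oa alpha n * t) - Bt alpha n t).

Lemma is_series_P alpha t f n : is_series (fun j => p alpha n j t * f j) (Pc alpha t f n).
Proof.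
  unfold Pc. destruct (Nat.eqb_spec n 0).
  - subst. eapply is_series_ext; [|apply (is_series_delta 0 (f 0%nat))].
    intros j. unfold p. simpl. destruct (Nat.eqb_spec j 0); [subst; ring|ring].
  - destruct (Nat.even n) eqn:Ev.
    + eapply is_series_ext; [|apply (is_series_plus _ _ _ _ (is_series_delta n _) (is_series_delta 0 _))].
      intros j. unfold p, plus; simpl. destruct (Nat.eqb_spec n 0); [lia|]. rewrite Ev. fold (ea alpha n).
      destruct (Nat.eqb_spec j n); destruct (Nat.eqb_spec j 0); subst; try lia; ring.
    + eapply is_series_ext; [|apply (is_series_plus _ _ _ _ (is_series_plus _ _ _ _ (is_series_delta n _) (is_series_delta (n+1) _)) (is_series_delta 0 _))].
      intros j. unfold p, plus; simpl. destruct (Nat.eqb_spec n 0); [lia|]. rewrite Ev. fold (oa alpha n). unfold Bt.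
      destruct (Nat.eqb_spec j n); destruct (Nat.eqb_spec j (n+1)); destruct (Nat.eqb_spec j 0); subst; try lia; ring.
Qed.

Lemma P_eq alpha t f n : P alpha t f n = Pc alpha t f n.
Proof. unfold P. apply is_series_unique, is_series_P. Qed.
Lemma P_eqf alpha t f : P alpha t f = Pc alpha t f.
Proof. apply functional_extensionality; intro; apply P_eq. Qed.

Lemma Pc0 alpha f : Pc alpha 0 f = f.
Proof.
  apply functional_extensionality; intro n. unfold Pc, Bt.
  rewrite !Rmult_0_r, exp_0. destruct (Nat.eqb_spec n 0); [subst; reflexivity|].
  destruct (Nat.even n); ring.
Qed.

Lemma ea_succ alpha n : ea alpha (n+1) = oa alpha n.
Proof. unfold ea, oa. rewrite plus_INR. simpl. f_equal. ring. Qed.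

Lemma exp_split a t s : exp (- a * (t + s)) = exp (- a * t) * exp (- a * s).
Proof. rewrite <- exp_plus. f_equal. ring. Qed.

Lemma Pc_semi alpha t s f : Pc alpha (t + s) f = Pc alpha s (Pc alpha t f).
Proof.
  apply functional_extensionality; intro n. unfold Pc at 1 2 3.
  destruct (Nat.eqb_spec n 0); [subst; reflexivity|]. simpl Nat.eqb.
  destruct (Nat.even n) eqn:Ev.
  - rewrite exp_split. ring.
  - assert (E1: Nat.eqb (n+1) 0 = false) by (apply Nat.eqb_neq; lia).
    assert (E2: Nat.even (n+1) = true) by (rewrite Nat.add_1_r, Nat.even_succ, <- Nat.negb_even, Ev; reflexivity).
    rewrite E1, E2, ea_succ. unfold Bt. rewrite !exp_split. ring.
Qed.

Lemma oa_pos alpha n : 0 < oa alpha n.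
Proof. unfold oa, Rpower. apply exp_pos. Qed.
Lemma ea_pos alpha n : 0 < ea alpha n.
Proof. unfold ea, Rpower. apply exp_pos. Qed.

Lemma coef_bounds a c t : 0 < a -> 0 < c <= 1 -> 0 <= t ->
  0 < exp (- a * t) <= 1 /\ 0 <= c * a * t * exp (- a * t) /\
  0 <= 1 - exp (- a * t) - c * a * t * exp (- a * t).
Proof.
  intros Ha Hc Ht. pose proof (exp_pos (- a * t)) as He.
  assert (He1 : exp (- a * t) <= 1) by (rewrite <- exp_0; apply exp_le; nra).
  assert (0 <= a * t) by nra.
  split; [lra|]. split. { repeat apply Rmult_le_pos; lra. }
  pose proof (exp_ineq1_le (a * t)).
  assert (exp (a * t) * exp (- a * t) = 1) by (rewrite <- exp_plus; replace (a*t + - a*t) with 0 by ring; apply exp_0).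
  assert (c * a * t * exp (- a * t) <= a * t * exp (- a * t)).
  { assert (0 <= a * t * exp (- a * t)) by (apply Rmult_le_pos; lra).
    replace (c * a * t * exp (- a * t)) with (c * (a * t * exp (- a * t))) by ring. nra. }
  nra.
Qed.

Lemma expn_bound n : 0 < exp (- INR n) <= 1.
Proof. split; [apply exp_pos|]. rewrite <- exp_0. apply exp_le. pose proof (pos_INR n). lra. Qed.

Lemma Pc_pos alpha t f n : 0 <= t -> (forall j, 0 <= f j) -> 0 <= Pc alpha t f n.
Proof.
  intros Ht Hf. unfold Pc. pose proof (Hf n). pose proof (Hf 0%nat). pose proof (Hf (n+1)%nat).
  destruct (Nat.eqb n 0); [auto|]. destruct (Nat.even n).
  - destruct (coef_bounds (ea alpha n) 1 t (ea_pos _ _) ltac:(lra) Ht) as [[A1 A2] _].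
    apply Rplus_le_le_0_compat; apply Rmult_le_pos; lra.
  - destruct (coef_bounds (oa alpha n) (exp (- INR n)) t (oa_pos _ _) (expn_bound n) Ht) as [[A1 A2] [A3 A4]].
    unfold Bt. repeat apply Rplus_le_le_0_compat; apply Rmult_le_pos; lra.
Qed.

Lemma Pc_cont alpha f n : continuous (fun t => Pc alpha t f n) 0.
Proof.
  apply (@ex_derive_continuous R_AbsRing R_NormedModule). unfold Pc, Bt.
  destruct (Nat.eqb n 0); [apply ex_derive_const|]. destruct (Nat.even n); auto_derive; auto.
Qed.

Lemma Pc_lim alpha f x : filterlim (fun t => Pc alpha t f x) (at_right 0) (locally (f x)).
Proof.
  pose proof (Pc_cont alpha f x) as H. unfold continuous in H.
  replace (f x) with (Pc alpha 0 f x) by (rewrite Pc0; reflexivity).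
  eapply filterlim_filter_le_1; [|exact H].
  intros P [e He]. exists e. intros y Hy _. apply He, Hy.
Qed.

Lemma ln_le' x y : 0 < x -> x <= y -> ln x <= ln y.
Proof. intros Hx [H|H]; [left; apply ln_increasing; lra|subst; lra]. Qed.

Lemma nat_above (r : R) : exists N : nat, (1 <= N)%nat /\ r <= INR N.
Proof.
  destruct (Rle_dec 0 r) as [H|H].
  - destruct (nfloor_ex r H) as [n Hn]. exists (S n). split; [lia|]. rewrite S_INR. lra.
  - exists 1%nat. split; [lia|]. simpl. lra.
Qed.

Lemma oa_split alpha n : (1 <= n)%nat -> oa alpha n = INR n * Rpower (INR n) (alpha - 1).
Proof.
  intros Hn. unfold oa. replace alpha with (1 + (alpha - 1)) at 1 by ring.
  rewrite Rpower_plus, Rpower_1; [reflexivity|]. apply lt_0_INR; lia.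
Qed.

Lemma growth alpha (Ha : 1 < alpha) t (Ht : 0 < t) :
  exists N : nat, (1 <= N)%nat /\ forall n, (N <= n)%nat -> 2 * (INR n + 1) <= oa alpha n * t.
Proof.
  set (K := 4 / t).
  destruct (nat_above (exp (K / (alpha - 1)))) as [N [HN1 HN2]].
  exists N. split; [exact HN1|]. intros n Hn.
  assert (Hn1 : (1 <= n)%nat) by lia.
  assert (HnN : INR N <= INR n) by (apply le_INR; lia).
  assert (Hn0 : 1 <= INR n) by (replace 1 with (INR 1) by reflexivity; apply le_INR; lia).
  rewrite oa_split by exact Hn1.
  assert (Hl : K / (alpha - 1) <= ln (INR n)).
  { rewrite <- (ln_exp (K / (alpha - 1))). apply ln_le'. apply exp_pos. lra. }
  assert (Hr : K <= Rpower (INR n) (alpha - 1)).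
  { unfold Rpower. pose proof (exp_ineq1_le ((alpha - 1) * ln (INR n))).
    assert (K <= (alpha - 1) * ln (INR n)).
    { apply Rmult_le_compat_l with (r := alpha - 1) in Hl; [|lra].
      unfold Rdiv in Hl. rewrite <- Rmult_assoc, (Rmult_comm (alpha - 1) K), Rmult_assoc, Rinv_r, Rmult_1_r in Hl by lra.
      exact Hl. }
    lra. }
  assert (HKt : K * t = 4) by (unfold K; field; lra).
  assert (INR n * Rpower (INR n) (alpha - 1) * t >= INR n * K * t).
  { apply Rle_ge. apply Rmult_le_compat_r; [lra|]. apply Rmult_le_compat_l; lra. }
  nra.
Qed.

Lemma rho_succ n : rho (n + 1) = rho n * exp (2 * INR n + 1).
Proof. unfold rho. rewrite <- exp_plus. f_equal. rewrite plus_INR. simpl. ring. Qed.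

Lemma ratio_bound alpha (Ha : 1 < alpha) t (Ht : 0 <= t) :
  exists K, 0 <= K /\ forall n, exp (2 * INR n + 1) * Bt alpha n t <= K.
Proof.
  destruct Ht as [Ht|Ht].
  - destruct (growth alpha Ha t Ht) as [N [HN1 HN]].
    exists (2 * exp (INR N + 1)). split. { pose proof (exp_pos (INR N + 1)); lra. }
    intros n. set (x := oa alpha n * t).
    assert (Hx : 0 <= x) by (unfold x; pose proof (oa_pos alpha n); nra).
    assert (E : exp (2 * INR n + 1) * Bt alpha n t = x * exp (- x / 2) * exp (INR n + 1 - x / 2)).
    { assert (Ex : exp (- oa alpha n * t) = exp (- x)) by (unfold x; f_equal; ring).
      assert (Ey : exp (2 * INR n + 1) * exp (- INR n) * exp (- x) = exp (- x / 2) * exp (INR n + 1 - x / 2))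
        by (rewrite <- !exp_plus; f_equal; field).
      unfold Bt. rewrite Ex. transitivity (x * (exp (2 * INR n + 1) * exp (- INR n) * exp (- x))).
      - unfold x. ring.
      - rewrite Ey. ring. }
    rewrite E.
    assert (H1 : x * exp (- x / 2) <= 2).
    { pose proof (exp_ineq1_le (x / 2)).
      assert (exp (x / 2) * exp (- x / 2) = 1) by (rewrite <- exp_plus; replace (x / 2 + - x / 2) with 0 by field; apply exp_0).
      pose proof (exp_pos (- x / 2)). nra. }
    assert (H2 : exp (INR n + 1 - x / 2) <= exp (INR N + 1)).
    { apply exp_le. destruct (le_lt_dec N n) as [Hle|Hlt].
      - pose proof (HN n Hle). fold x in H. pose proof (pos_INR N). lra.
      - assert (INR n <= INR N) by (apply le_INR; lia). lra. }
    assert (0 <= x * exp (- x / 2)) by (pose proof (exp_pos (- x / 2)); nra).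
    pose proof (exp_pos (INR n + 1 - x / 2)). nra.
  - subst. exists 0. split; [lra|]. intros n. unfold Bt. rewrite Rmult_0_r, Rmult_0_l, Rmult_0_r. lra.
Qed.

Lemma rho0 : rho 0 = 1.
Proof. unfold rho. replace (INR 0 ^ 2) with 0 by (simpl; ring). apply exp_0. Qed.
Lemma rho_mono n : rho 0 <= rho n.
Proof. rewrite rho0. apply rho_ge1. Qed.

Lemma Pc_bound alpha (Ha : 1 < alpha) t (Ht : 0 <= t) :
  exists C, 0 < C /\ forall (h : nat -> R) w, (forall j, Rabs (h j) <= w * rho j) ->
    forall n, Rabs (Pc alpha t h n) <= C * w * rho n.
Proof.
  destruct (ratio_bound alpha Ha t Ht) as [K [HK0 HK]].
  exists (2 + K). split; [lra|]. intros h w Hh n.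
  assert (Hw : 0 <= w). { pose proof (Hh 0%nat). pose proof (rho_pos 0). pose proof (Rabs_pos (h 0%nat)). nra. }
  pose proof (Hh n) as Hn. pose proof (Hh 0%nat) as H0. pose proof (Hh (n+1)%nat) as H1.
  pose proof (rho_mono n). pose proof (rho_pos n).
  assert (w * rho 0 <= w * rho n) by (apply Rmult_le_compat_l; lra).
  assert (0 <= K * w * rho n) by (apply Rmult_le_pos; [apply Rmult_le_pos|]; lra).
  unfold Pc. destruct (Nat.eqb_spec n 0).
  - subst. nra.
  - destruct (Nat.even n).
    + destruct (coef_bounds (ea alpha n) 1 t (ea_pos _ _) ltac:(lra) Ht) as [[A1 A2] _].
      eapply Rle_trans; [apply Rabs_triang|]. rewrite !Rabs_mult, (Rabs_pos_eq (exp _)), (Rabs_pos_eq (1 - _)) by lra.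
      assert (Rabs (h n) * exp (- ea alpha n * t) <= w * rho n) by (pose proof (Rabs_pos (h n)); nra).
      assert (Rabs (h 0%nat) * (1 - exp (- ea alpha n * t)) <= w * rho n) by (pose proof (Rabs_pos (h 0%nat)); nra).
      nra.
    + destruct (coef_bounds (oa alpha n) (exp (- INR n)) t (oa_pos _ _) (expn_bound n) Ht) as [[A1 A2] [A3 A4]].
      fold (Bt alpha n t) in A3, A4.
      eapply Rle_trans; [apply Rabs_triang|]. eapply Rle_trans; [apply Rplus_le_compat_r; apply Rabs_triang|].
      rewrite !Rabs_mult, (Rabs_pos_eq (exp _)), (Rabs_pos_eq (Bt _ _ _)), (Rabs_pos_eq (1 - _ - _)) by lra.
      assert (Rabs (h n) * exp (- oa alpha n * t) <= w * rho n) by (pose proof (Rabs_pos (h n)); nra).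
      assert (Rabs (h 0%nat) * (1 - exp (- oa alpha n * t) - Bt alpha n t) <= w * rho n) by (pose proof (Rabs_pos (h 0%nat)); nra).
      assert (Rabs (h (n+1)%nat) * Bt alpha n t <= K * w * rho n).
      { eapply Rle_trans. apply Rmult_le_compat_r; [exact A3| exact H1].
        rewrite rho_succ. pose proof (HK n).
        replace (w * (rho n * exp (2 * INR n + 1)) * Bt alpha n t) with (w * rho n * (exp (2 * INR n + 1) * Bt alpha n t)) by ring.
        replace (K * w * rho n) with (w * rho n * K) by ring.
        apply Rmult_le_compat_l; [nra|lra]. }
      nra.
Qed.

Lemma ratio_le (h : nat -> R) c j : Rabs (h j) / rho j <= c -> Rabs (h j) <= c * rho j.
Proof. intros H. pose proof (rho_pos j). unfold Rdiv in H.
  apply Rmult_le_compat_r with (r := rho j) in H; [|lra]. rewrite Rmult_assoc, Rinv_l, Rmult_1_r in H by lra. exact H. Qed.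
Lemma le_ratio (h : nat -> R) c j : Rabs (h j) <= c * rho j -> Rabs (h j) / rho j <= c.
Proof. intros H. pose proof (rho_pos j). unfold Rdiv.
  apply Rmult_le_reg_r with (rho j); [lra|]. rewrite Rmult_assoc, Rinv_l, Rmult_1_r by lra. exact H. Qed.

Lemma Brho_fin f : Brho f -> exists r, wnorm f = Finite r /\ 0 <= r /\ forall j, Rabs (f j) <= r * rho j.
Proof.
  intros [[C HC] _]. destruct (wnorm_fin f C (wnorm_le_inv f C HC)) as [r [E [H0 H]]].
  exists r. split; [exact E|]. split; [exact H0|]. intros j. apply ratio_le, H.
Qed.

Lemma Pc_lin alpha t f g c : Pc alpha t (fun n => c * f n + g n) = (fun n => c * Pc alpha t f n + Pc alpha t g n).
Proof. apply functional_extensionality; intro n. unfold Pc. destruct (Nat.eqb n 0); [ring|]. destruct (Nat.even n); ring. Qed.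

Lemma Pc_Cb alpha t f : 0 <= t -> Cb f -> Cb (Pc alpha t f).
Proof.
  intros Ht [M HM]. exists (3 * M). intros n. pose proof (HM n). pose proof (HM 0%nat). pose proof (HM (n+1)%nat).
  assert (0 <= M) by (pose proof (Rabs_pos (f 0%nat)); lra).
  unfold Pc. destruct (Nat.eqb n 0); [lra|]. destruct (Nat.even n).
  + destruct (coef_bounds (ea alpha n) 1 t (ea_pos _ _) ltac:(lra) Ht) as [[A1 A2] _].
    eapply Rle_trans; [apply Rabs_triang|]. rewrite !Rabs_mult, (Rabs_pos_eq (exp _)), (Rabs_pos_eq (1 - _)) by lra.
    pose proof (Rabs_pos (f n)). pose proof (Rabs_pos (f 0%nat)). nra.
  + destruct (coef_bounds (oa alpha n) (exp (- INR n)) t (oa_pos _ _) (expn_bound n) Ht) as [[A1 A2] [A3 A4]].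
    fold (Bt alpha n t) in A3, A4.
    eapply Rle_trans; [apply Rabs_triang|]. eapply Rle_trans; [apply Rplus_le_compat_r; apply Rabs_triang|].
    rewrite !Rabs_mult, (Rabs_pos_eq (exp _)), (Rabs_pos_eq (Bt _ _ _)), (Rabs_pos_eq (1 - _ - _)) by lra.
    pose proof (Rabs_pos (f n)). pose proof (Rabs_pos (f 0%nat)). pose proof (Rabs_pos (f (n+1)%nat)).
    assert (Bt alpha n t <= 1) by lra. nra.
Qed.

Lemma part1 alpha (Ha : 1 < alpha) t (Ht : 0 <= t) :
     (forall f, Brho f -> forall n, ex_series (fun j => p alpha n j t * f j)) /\
     (forall f, Brho f -> Brho (P alpha t f)) /\
     (forall f g c, Brho f -> Brho g ->
        P alpha t (fun n => c * f n + g n) = (fun n => c * P alpha t f n + P alpha t g n)) /\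
     (exists C, forall f, Brho f ->
        Rbar_le (wnorm (P alpha t f)) (Rbar_mult (Finite C) (wnorm f))).
Proof.
  destruct (Pc_bound alpha Ha t Ht) as [C [HC HB]].
  split; [|split; [|split]].
  - intros f _ n. eexists. apply is_series_P.
  - intros f Hf. rewrite P_eqf. destruct (Brho_fin f Hf) as [r [_ [Hr0 Hr]]]. split.
    + exists (C * r). apply wnorm_le. intros n. apply (le_ratio (Pc alpha t f)). apply HB. exact Hr.
    + intros eps Heps. destruct Hf as [_ Hf]. destruct (Hf (eps / C)) as [g [Hg Hfg]].
      { apply Rdiv_lt_0_compat; lra. }
      exists (Pc alpha t g). split; [apply Pc_Cb; assumption|].
      apply wnorm_le. intros n. apply (le_ratio (fun m => Pc alpha t f m - Pc alpha t g m)). cbv beta.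
      assert (E : Pc alpha t f n - Pc alpha t g n = Pc alpha t (fun j => f j - g j) n).
      { assert (E1 : (fun j => f j - g j) = (fun j => 1 * f j + (-1) * g j)) by (apply functional_extensionality; intro; ring).
        rewrite E1. pose proof (Pc_lin alpha t f (fun j => (-1) * g j) 1) as L1.
        rewrite L1. pose proof (Pc_lin alpha t g (fun _ => 0) (-1)) as L2.
        assert (E2 : (fun j => -1 * g j) = (fun j => -1 * g j + (fun _ => 0) j)) by (apply functional_extensionality; intro; simpl; ring).
        rewrite E2, L2. unfold Pc. destruct (Nat.eqb n 0); [ring|]. destruct (Nat.even n); ring. }
      rewrite E. replace eps with (C * (eps / C)) by (field; lra).
      apply HB. intros j. apply (ratio_le (fun m => f m - g m)), (wnorm_le_inv _ _ Hfg).
  - intros f g c _ _. rewrite !P_eqf. apply Pc_lin.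
  - exists C. intros f Hf. rewrite P_eqf. destruct (Brho_fin f Hf) as [r [E [Hr0 Hr]]]. rewrite E. simpl.
    apply wnorm_le. intros n. apply (le_ratio (Pc alpha t f)). apply HB. exact Hr.
Qed.

Lemma step_lemma (Q : nat -> Prop) m K : ~ Q m -> Q K -> (m <= K)%nat -> exists k, (m <= k)%nat /\ ~ Q k /\ Q (S k).
Proof.
  intros Hm. induction K; intros HK Hle.
  - assert (m = 0%nat) by lia. subst. contradiction.
  - destruct (classic (Q K)) as [HQ|HQ].
    + destruct (Nat.eq_dec m (S K)). { subst. contradiction. } apply IHK; auto; lia.
    + exists K. split; [|auto]. destruct (Nat.eq_dec m (S K)). { subst. contradiction. } lia.
Qed.

Lemma oa_ge alpha (Ha : 1 < alpha) m : (1 <= m)%nat -> INR m <= oa alpha m.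
Proof.
  intros Hm. assert (H1 : 1 <= INR m) by (replace 1 with (INR 1) by reflexivity; apply le_INR; lia).
  unfold oa. rewrite <- (Rpower_1 (INR m)) at 1 by lra. apply Rle_Rpower; lra.
Qed.

Lemma find_n alpha (Ha : 1 < alpha) (N : nat) : exists delta, 0 < delta /\ forall t, 0 < t < delta ->
  exists n, Nat.odd n = true /\ (N <= n)%nat /\ 1 <= oa alpha n * t <= Rpower 3 alpha.
Proof.
  pose proof (oa_pos alpha (2 * (N+1) + 1)) as Hp.
  exists (/ oa alpha (2 * (N+1) + 1)). split; [apply Rinv_0_lt_compat; exact Hp|].
  intros t [Ht Htd].
  set (Q := fun k => 1 <= oa alpha (2 * k + 1) * t).
  assert (HnQ : ~ Q (N+1)%nat).
  { unfold Q. intros H. apply Rmult_lt_compat_l with (r := oa alpha (2 * (N+1) + 1)) in Htd; [|exact Hp].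
    rewrite Rinv_r in Htd by lra. lra. }
  destruct (nat_above (Rmax (/ t) (INR (N+1)))) as [K [HK1 HK2]].
  assert (HQK : Q K).
  { unfold Q. pose proof (oa_ge alpha Ha (2 * K + 1) ltac:(lia)).
    assert (INR K <= INR (2 * K + 1)) by (apply le_INR; lia).
    pose proof (Rmax_l (/ t) (INR (N+1))).
    assert (/ t * t = 1) by (field; lra). nra. }
  assert (HKN : (N + 1 <= K)%nat).
  { apply INR_le. pose proof (Rmax_r (/ t) (INR (N+1))). lra. }
  destruct (step_lemma Q (N+1) K HnQ HQK HKN) as [k [Hk1 [Hk2 Hk3]]].
  exists (2 * S k + 1)%nat. split; [apply Nat.odd_odd|]. split; [lia|]. split; [exact Hk3|].
  unfold Q in Hk2. apply Rnot_le_lt in Hk2.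
  set (m := (2 * k + 1)%nat) in *.
  assert (Hm1 : 1 <= INR m) by (replace 1 with (INR 1) by reflexivity; apply le_INR; unfold m; lia).
  assert (En : INR (2 * S k + 1) = (INR (2 * S k + 1) / INR m) * INR m) by (field; lra).
  assert (Hq : 0 < INR (2 * S k + 1) / INR m <= 3).
  { assert (INR (2 * S k + 1) = INR m + 2) by (replace (2 * S k + 1)%nat with (m + 2)%nat by (unfold m; lia); rewrite plus_INR; reflexivity).
    split. apply Rdiv_lt_0_compat; lra. apply Rmult_le_reg_r with (INR m); [lra|].
    unfold Rdiv. rewrite Rmult_assoc, Rinv_l by lra. lra. }
  assert (Hoa : oa alpha (2 * S k + 1) <= Rpower 3 alpha * oa alpha m).
  { unfold oa at 1. rewrite En, <- Rpower_mult_distr by lra. unfold oa.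
    apply Rmult_le_compat_r. unfold Rpower; left; apply exp_pos.
    apply Rle_Rpower_l; lra. }
  assert (0 < Rpower 3 alpha) by (unfold Rpower; apply exp_pos).
  assert (oa alpha (2 * S k + 1) * t <= Rpower 3 alpha * (oa alpha m * t)) by (rewrite <- Rmult_assoc; apply Rmult_le_compat_r; lra).
  nra.
Qed.

Lemma Bt_ratio alpha n t : exp (2 * INR n + 1) * Bt alpha n t = exp (INR n + 1) * (oa alpha n * t) * exp (- (oa alpha n * t)).
Proof.
  unfold Bt. assert (Ex : exp (- oa alpha n * t) = exp (- (oa alpha n * t))) by (f_equal; ring).
  rewrite Ex. assert (E2 : exp (2 * INR n + 1) * exp (- INR n) = exp (INR n + 1)) by (rewrite <- exp_plus; f_equal; ring).
  rewrite <- E2. ring.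
Qed.

Lemma xex_low x R3 : 1 <= x <= R3 -> exp (- R3) <= x * exp (- x).
Proof.
  intros [H1 H2]. assert (exp (- R3) <= exp (- x)) by (apply exp_le; lra).
  pose proof (exp_pos (- x)). nra.
Qed.

Lemma Pc_odd alpha t f n : Nat.odd n = true ->
  Pc alpha t f n = f n * exp (- oa alpha n * t) + f (n+1)%nat * Bt alpha n t + f 0%nat * (1 - exp (- oa alpha n * t) - Bt alpha n t).
Proof.
  intros Ho. unfold Pc. destruct (Nat.eqb_spec n 0). { subst. discriminate. }
  rewrite <- Nat.negb_odd, Ho. reflexivity.
Qed.

Lemma blowup alpha (Ha : 1 < alpha) (M : R) : exists delta, 0 < delta /\
     forall t, 0 < t < delta -> Rbar_lt (Finite M) (opnorm alpha t).
Proof.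
  set (R3 := Rpower 3 alpha).
  destruct (nat_above (R3 + Rabs M)) as [N [_ HN]].
  destruct (find_n alpha Ha N) as [delta [Hd Hfind]].
  exists delta. split; [exact Hd|]. intros t Ht.
  destruct (Hfind t Ht) as [n [Hodd [HnN Hx]]].
  set (f := fun j => if Nat.eqb j (n+1) then rho j else 0).
  assert (Hcb : Cb f).
  { exists (rho (n+1)). intros j. unfold f. destruct (Nat.eqb_spec j (n+1)).
    - subst. rewrite Rabs_pos_eq; [lra|left; apply rho_pos].
    - rewrite Rabs_R0. left; apply rho_pos. }
  assert (Hbf : Brho f) by (apply Cb_Brho; exact Hcb).
  destruct (part1 alpha Ha t ltac:(lra)) as [_ [HP _]].
  destruct (Brho_fin _ (HP f Hbf)) as [r [Er [Hr0 Hr]]].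
  assert (Hin : (fun r => exists f, Brho f /\ Rbar_le (wnorm f) (Finite 1) /\ wnorm (P alpha t f) = Finite r) r).
  { exists f. split; [exact Hbf|]. split; [|exact Er].
    apply wnorm_le. intros j. unfold f. destruct (Nat.eqb_spec j (n+1)).
    - rewrite Rabs_pos_eq by (left; apply rho_pos). unfold Rdiv. rewrite Rinv_r; [lra|]. pose proof (rho_pos j); lra.
    - rewrite Rabs_R0. unfold Rdiv. rewrite Rmult_0_l. lra. }
  unfold opnorm. destruct (Lub_Rbar_correct (fun r => exists f, Brho f /\ Rbar_le (wnorm f) (Finite 1) /\ wnorm (P alpha t f) = Finite r)) as [Hub _].
  apply Rbar_lt_le_trans with (Finite r); [|apply Hub, Hin]. simpl.
  pose proof (Hr n) as Hrn. rewrite P_eq, Pc_odd in Hrn by exact Hodd.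
  assert (Ef : f n = 0 /\ f 0%nat = 0 /\ f (n+1)%nat = rho (n+1)).
  { unfold f. destruct (Nat.eqb_spec n (n+1)); [lia|]. destruct (Nat.eqb_spec 0 (n+1)); [lia|].
    rewrite Nat.eqb_refl. auto. }
  destruct Ef as [E1 [E2 E3]]. rewrite E1, E2, E3 in Hrn.
  rewrite rho_succ in Hrn.
  assert (HB : 0 <= Bt alpha n t).
  { destruct (coef_bounds (oa alpha n) (exp (- INR n)) t (oa_pos _ _) (expn_bound n) ltac:(lra)) as [_ [A _]]. exact A. }
  assert (Heq : 0 * exp (- oa alpha n * t) + rho n * exp (2 * INR n + 1) * Bt alpha n t +
       0 * (1 - exp (- oa alpha n * t) - Bt alpha n t) = rho n * (exp (2 * INR n + 1) * Bt alpha n t)) by ring.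
  rewrite Heq, Bt_ratio in Hrn. rewrite Rabs_pos_eq in Hrn.
  2:{ pose proof (rho_pos n). pose proof (exp_pos (INR n + 1)). pose proof (exp_pos (- (oa alpha n * t))). pose proof (oa_pos alpha n).
      apply Rmult_le_pos; [lra|]. apply Rmult_le_pos; [apply Rmult_le_pos|]; nra. }
  pose proof (xex_low (oa alpha n * t) R3 Hx) as Hlow.
  assert (HNn : INR N <= INR n) by (apply le_INR; exact HnN).
  assert (Hexp : 1 + (INR n + 1 - R3) <= exp (INR n + 1) * exp (- R3)) by (rewrite <- exp_plus; apply exp_ineq1_le).
  pose proof (Rle_abs M). pose proof (rho_pos n). pose proof (exp_pos (INR n + 1)). pose proof (exp_pos (- R3)).
  assert (exp (INR n + 1) * exp (- R3) <= exp (INR n + 1) * (oa alpha n * t * exp (- (oa alpha n * t))))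
    by (apply Rmult_le_compat_l; lra).
  assert (M < exp (INR n + 1) * (oa alpha n * t * exp (- (oa alpha n * t)))) by lra.
  assert (rho n * (exp (INR n + 1) * (oa alpha n * t) * exp (- (oa alpha n * t))) <= r * rho n) by exact Hrn.
  assert (exp (INR n + 1) * (oa alpha n * t) * exp (- (oa alpha n * t)) <= r).
  { apply Rmult_le_reg_l with (rho n); [lra|]. lra. }
  nra.
Qed.

Definition fsc (j : nat) : R := if Nat.odd j then 0 else rho j * exp (- INR j).

Lemma rho_le j N : (j <= N)%nat -> rho j <= rho N.
Proof. intros H. unfold rho. apply exp_le. assert (INR j <= INR N) by (apply le_INR; exact H). pose proof (pos_INR j). simpl. nra. Qed.

Lemma fsc_bound j : 0 <= fsc j <= rho j * exp (- INR j).
Proof. unfold fsc. pose proof (rho_pos j). pose proof (exp_pos (- INR j)). destruct (Nat.odd j); nra. Qed.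

Lemma Brho_fsc : Brho fsc.
Proof.
  split.
  - exists 1. apply wnorm_le. intros n. apply le_ratio. pose proof (fsc_bound n). rewrite Rabs_pos_eq by lra.
    pose proof (expn_bound n). pose proof (rho_pos n). nra.
  - intros eps Heps. destruct (nat_above (/ eps)) as [N [_ HN]].
    exists (fun j => if Nat.leb j N then fsc j else 0). split.
    + exists (rho N). intros j. destruct (Nat.leb_spec j N).
      * pose proof (fsc_bound j). rewrite Rabs_pos_eq by lra. pose proof (rho_le j N H). pose proof (expn_bound j). pose proof (rho_pos j). nra.
      * rewrite Rabs_R0. left; apply rho_pos.
    + apply wnorm_le. intros j. apply (le_ratio (fun n => fsc n - (if Nat.leb n N then fsc n else 0))). cbv beta.
      destruct (Nat.leb_spec j N).
      * replace (fsc j - fsc j) with 0 by ring. rewrite Rabs_R0. pose proof (rho_pos j). nra.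
      * replace (fsc j - 0) with (fsc j) by ring. pose proof (fsc_bound j). rewrite Rabs_pos_eq by lra.
        assert (exp (- INR j) < eps).
        { pose proof (exp_ineq1_le (INR j)). assert (INR N <= INR j) by (apply le_INR; lia).
          rewrite exp_Ropp. rewrite <- (Rinv_inv eps). apply Rinv_lt_contravar.
          - apply Rmult_lt_0_compat; [apply Rinv_0_lt_compat; lra| apply exp_pos].
          - lra. }
        pose proof (rho_pos j). nra.
Qed.

Lemma not_sc alpha (Ha : 1 < alpha) : ~ (forall f, Brho f -> forall eps, 0 < eps -> exists delta, 0 < delta /\
       forall t, 0 < t < delta ->
         Rbar_le (wnorm (fun n => P alpha t f n - f n)) (Finite eps)).
Proof.
  intros H. set (R3 := Rpower 3 alpha).
  pose proof (exp_pos (- R3)) as He.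
  destruct (H fsc Brho_fsc (exp (- R3) / 2) ltac:(lra)) as [d1 [Hd1 H1]].
  destruct (find_n alpha Ha 0) as [d2 [Hd2 H2]].
  set (t := Rmin d1 d2 / 2).
  assert (Ht1 : 0 < t < d1) by (unfold t; pose proof (Rmin_l d1 d2); pose proof (Rmin_r d1 d2); pose proof (Rmin_glb_lt d1 d2 0 Hd1 Hd2); lra).
  assert (Ht2 : 0 < t < d2) by (unfold t; pose proof (Rmin_l d1 d2); pose proof (Rmin_r d1 d2); pose proof (Rmin_glb_lt d1 d2 0 Hd1 Hd2); lra).
  destruct (H2 t Ht2) as [n [Hodd [_ Hx]]].
  pose proof (wnorm_le_inv _ _ (H1 t Ht1) n) as Hn. cbv beta in Hn.
  apply (ratio_le (fun m => P alpha t fsc m - fsc m)) in Hn. cbv beta in Hn. rewrite P_eq, Pc_odd in Hn by exact Hodd.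
  assert (Ef : fsc n = 0 /\ fsc 0%nat = 1 /\ fsc (n+1)%nat = rho (n+1) * exp (- INR (n+1))).
  { unfold fsc. rewrite Hodd. replace (Nat.odd 0) with false by reflexivity.
    assert (Nat.odd (n+1) = false) by (rewrite Nat.add_1_r, Nat.odd_succ, <- Nat.negb_odd, Hodd; reflexivity).
    rewrite H0. split; [reflexivity|]. split; [|reflexivity]. rewrite rho0. simpl. replace (-0) with 0 by ring. rewrite exp_0. ring. }
  destruct Ef as [E1 [E2 E3]]. rewrite E1, E2, E3 in Hn.
  destruct (coef_bounds (oa alpha n) (exp (- INR n)) t (oa_pos _ _) (expn_bound n) ltac:(lra)) as [_ [A3 A4]].
  fold (Bt alpha n t) in A3, A4.
  rewrite rho_succ in Hn.
  assert (Hk : exp (- INR (n+1)) * exp (INR n + 1) = 1).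
  { rewrite <- exp_plus, plus_INR. simpl. replace (- (INR n + 1) + (INR n + 1)) with 0 by ring. apply exp_0. }
  assert (Hsum : 0 * exp (- oa alpha n * t) + rho n * exp (2 * INR n + 1) * exp (- INR (n + 1)) * Bt alpha n t +
       1 * (1 - exp (- oa alpha n * t) - Bt alpha n t) - 0 = rho n * exp (2 * INR n + 1) * exp (- INR (n + 1)) * Bt alpha n t + (1 - exp (- oa alpha n * t) - Bt alpha n t)) by ring.
  rewrite Hsum in Hn.
  set (X := rho n * exp (2 * INR n + 1) * exp (- INR (n + 1)) * Bt alpha n t) in *.
  assert (EX : X = rho n * (oa alpha n * t * exp (- (oa alpha n * t)))).
  { unfold X. transitivity (rho n * exp (- INR (n+1)) * (exp (2 * INR n + 1) * Bt alpha n t)); [ring|].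
    rewrite Bt_ratio. transitivity (rho n * (exp (- INR (n + 1)) * exp (INR n + 1)) * (oa alpha n * t * exp (- (oa alpha n * t)))); [ring|].
    rewrite Hk. ring. }
  pose proof (xex_low _ R3 Hx) as Hlow. pose proof (rho_pos n).
  assert (0 <= X) by (rewrite EX; nra).
  rewrite Rabs_pos_eq in Hn by lra.
  nra.
Qed.

Theorem mainTheorem20 (alpha : R) (Halpha : 1 < alpha) :
  (forall t, 0 <= t ->
     (forall f, Brho f -> forall n, ex_series (fun j => p alpha n j t * f j)) /\
     (forall f, Brho f -> Brho (P alpha t f)) /\
     (forall f g c, Brho f -> Brho g ->
        P alpha t (fun n => c * f n + g n) = (fun n => c * P alpha t f n + P alpha t g n)) /\
     (exists C, forall f, Brho f ->
        Rbar_le (wnorm (P alpha t f)) (Rbar_mult (Finite C) (wnorm f)))) /\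
  (forall t, 0 <= t -> forall n, Nat.odd n = true ->
     P alpha t rho n =
       rho n * exp (- Rpower (INR n) alpha * t)
       + rho (n + 1) * Rpower (INR n) alpha * t * exp (- Rpower (INR n) alpha * t) * exp (- INR n)
       + rho 0 * (1 - exp (- Rpower (INR n) alpha * t)
                  - exp (- INR n) * Rpower (INR n) alpha * t * exp (- Rpower (INR n) alpha * t))) /\
  (forall f, Brho f -> P alpha 0 f = f) /\
  (forall s t, 0 <= s -> 0 <= t -> forall f, Brho f ->
     P alpha (t + s) f = P alpha s (P alpha t f)) /\
  (forall f, Brho f -> forall x,
     filterlim (fun t => P alpha t f x) (at_right 0) (locally (f x))) /\
  (forall t, 0 <= t -> forall f, Brho f -> (forall n, 0 <= f n) ->
     forall n, 0 <= P alpha t f n) /\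
  (forall M : R, exists delta, 0 < delta /\
     forall t, 0 < t < delta -> Rbar_lt (Finite M) (opnorm alpha t)) /\
  ~ (exists eps C, 0 < eps /\ forall t, 0 <= t <= eps -> Rbar_le (opnorm alpha t) (Finite C)) /\
  ~ (forall f, Brho f -> forall eps, 0 < eps -> exists delta, 0 < delta /\
       forall t, 0 < t < delta ->
         Rbar_le (wnorm (fun n => P alpha t f n - f n)) (Finite eps)).
Proof.
  split; [intros t Ht; apply part1; assumption|].
  split. { intros t Ht n Hn. rewrite P_eq, Pc_odd by exact Hn. unfold Bt, oa. ring. }
  split. { intros f _. rewrite P_eqf. apply Pc0. }
  split. { intros s t _ _ f _. rewrite !P_eqf. apply Pc_semi. }
  split. { intros f _ x. replace (fun t => P alpha t f x) with (fun t => Pc alpha t f x)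
             by (apply functional_extensionality; intro; symmetry; apply P_eq). apply Pc_lim. }
  split. { intros t Ht f _ Hf n. rewrite P_eq. apply Pc_pos; assumption. }
  split. { apply blowup; exact Halpha. }
  split.
  - intros [eps [C [He H]]]. destruct (blowup alpha Halpha C) as [d [Hd Hb]].
    set (t := Rmin eps d / 2).
    pose proof (Rmin_glb_lt eps d 0 He Hd). pose proof (Rmin_l eps d). pose proof (Rmin_r eps d).
    assert (Ht1 : 0 < t < d) by (unfold t; lra).
    assert (Ht2 : 0 <= t <= eps) by (unfold t; lra).
    pose proof (Hb t Ht1) as Hq1. pose proof (H t Ht2) as Hq2.
    exact (Rbar_lt_not_le _ _ Hq1 Hq2).
  - apply not_sc; exact Halpha.
Qed.
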